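(* Each of the following graphs is a transparent rectangle visibility graph (TRVG): (i) every threshold graph; (ii) every tree; (iii) every cycle $C_n$ ($n\ge 3$); (iv) the infinite rectangular grid graph; (v) the infinite triangular grid graph; (vi) the infinite hexagonal grid graph.
   Context: A graph $G$ is a transparent rectangle visibility graph (TRVG) if its vertices can be represented by a collection of pairwise non-overlapping (interior-disjoint) rectangles in the plane whose sides are parallel to the coordinate axes, one rectangle per vertex, such that two distinct vertices are adjacent if and only if there is a horizontal or a vertical line intersecting the interiors of both of their rectangles (other rectangles lying in between do not block visibility). For infinite graphs the collection of rectangles is infinite. A threshold graph is a finite graph that can be built from the one-vertex graph by repeatedly either adding an isolated vertex or adding a universal vertex (a new vertex adjacent to all existing vertices). The infinite rectangular grid graph has vertex set $\mathbb{Z}^2$, with $(i,j)$ and $(i',j')$ adjacent iff $|i-i'|+|j-j'|=1$. The infinite triangular grid graph has vertex set $\{v_{i,j}: i,j\in\mathbb{Z}\}$ where $v_{i,j}$ is adjacent exactly to $v_{i-1,j},v_{i+1,j},v_{i,j-1},v_{i+1,j-1},v_{i-1,j+1},v_{i,j+1}$ (the triangular lattice, each vertex of degree 6). The infinite hexagonal grid graph is the honeycomb lattice (the infinite 3-regular planar graph whose faces are hexagons); equivalently, the subgraph of the infinite triangular grid graph induced by removing the vertices $v_{a+3b,a}$ for all $a,b\in\mathbb{Z}$. *)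

(* Defs.v *)
From Stdlib Require Import Reals ZArith.
From mathcomp Require Import all_boot.

Set Implicit Arguments.
Unset Strict Implicit.
Unset Printing Implicit Defensive.

Record rect := Rect { rx1 : R; rx2 : R; ry1 : R; ry2 : R }.

Definition nondegenerate (r : rect) : Prop :=
  Rlt (rx1 r) (rx2 r) /\ Rlt (ry1 r) (ry2 r).

Definition in_interior (r : rect) (x y : R) : Prop :=
  (Rlt (rx1 r) x /\ Rlt x (rx2 r)) /\ (Rlt (ry1 r) y /\ Rlt y (ry2 r)).

Definition interiors_disjoint (r s : rect) : Prop :=
  ~ (exists x y, in_interior r x y /\ in_interior s x y).

Definition horiz_visible (r s : rect) : Prop :=
  exists c, (exists x, in_interior r x c) /\ (exists x', in_interior s x' c).

Definition vert_visible (r s : rect) : Prop :=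
  exists c, (exists y, in_interior r c y) /\ (exists y', in_interior s c y').

Definition is_TRVG (V : Type) (adj : V -> V -> Prop) : Prop :=
  exists f : V -> rect,
    (forall v, nondegenerate (f v)) /\
    (forall u v, u <> v -> interiors_disjoint (f u) (f v)) /\
    (forall u v, u <> v -> (adj u v <-> horiz_visible (f u) (f v) \/ vert_visible (f u) (f v))).

(* Threshold graph: built from one vertex by repeatedly adding an isolated
   or a universal vertex.  [ord v] is the step at which v is added and
   [b k] says whether the vertex added at step k was universal. *)
Definition is_threshold (V : finType) (e : rel V) : Prop :=
  (0 < #|V|)%N /\ irreflexive e /\
  exists (ord : V -> nat) (b : nat -> bool),
    injective ord /\
    forall u v, u != v -> e u v = b (maxn (ord u) (ord v)).

Definition has_cycle (V : finType) (e : rel V) : Prop :=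
  exists p : seq V, (3 <= size p)%N /\ uniq p /\ cycle e p.

Definition is_tree (V : finType) (e : rel V) : Prop :=
  (0 < #|V|)%N /\ (forall x y, connect e x y) /\ ~ has_cycle e.

Definition cycle_adj (n : nat) (i j : 'I_n) : Prop :=
  (val j = (val i).+1 %% n)%N \/ (val i = (val j).+1 %% n)%N.

Definition rect_grid_adj (p q : Z * Z) : Prop :=
  (Z.abs (fst p - fst q) + Z.abs (snd p - snd q) = 1)%Z.

Definition tri_grid_adj (p q : Z * Z) : Prop :=
  let i := fst p in let j := snd p in
  q = (i - 1, j)%Z \/ q = (i + 1, j)%Z \/ q = (i, j - 1)%Z \/
  q = (i + 1, j - 1)%Z \/ q = (i - 1, j + 1)%Z \/ q = (i, j + 1)%Z.

Definition hex_vertex : Type :=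
  { p : Z * Z | ~ exists a b : Z, p = (a + 3 * b, a)%Z }.

Definition hex_grid_adj (u v : hex_vertex) : Prop :=
  tri_grid_adj (proj1_sig u) (proj1_sig v).

(* Main.v *)
Require Import Defs.
From Stdlib Require Import Reals ZArith Lra Lia ProofIrrelevance.
From mathcomp Require Import all_boot zify.

Local Open Scope R_scope.

Definition hR (x : R) : R := x / (1 + Rabs x).

Lemma hR_bounds x : -1 < hR x < 1.
Proof.
  unfold hR. assert (Hp : 0 < 1 + Rabs x) by (generalize (Rabs_pos x); lra).
  split.
  - apply (Rmult_lt_reg_r (1 + Rabs x)); auto.
    unfold Rdiv; rewrite Rmult_assoc Rinv_l; [|lra].
    destruct (Rcase_abs x); [rewrite Rabs_left | rewrite Rabs_right]; lra.
  - apply (Rmult_lt_reg_r (1 + Rabs x)); auto.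
    unfold Rdiv; rewrite Rmult_assoc Rinv_l; [|lra].
    destruct (Rcase_abs x); [rewrite Rabs_left | rewrite Rabs_right]; lra.
Qed.

Lemma hR_mono x y : x < y -> hR x < hR y.
Proof.
  intro H. unfold hR.
  assert (Hx : 0 < 1 + Rabs x) by (generalize (Rabs_pos x); lra).
  assert (Hy : 0 < 1 + Rabs y) by (generalize (Rabs_pos y); lra).
  assert (E1 : x / (1 + Rabs x) = x * (1 + Rabs y) * / ((1 + Rabs x) * (1 + Rabs y))) by (field; lra).
  assert (E2 : y / (1 + Rabs y) = y * (1 + Rabs x) * / ((1 + Rabs x) * (1 + Rabs y))) by (field; lra).
  rewrite E1 E2. apply Rmult_lt_compat_r.
  - apply Rinv_0_lt_compat, Rmult_lt_0_compat; lra.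
  - destruct (Rcase_abs x); [rewrite (Rabs_left x) | rewrite (Rabs_right x)]; auto;
    destruct (Rcase_abs y); [rewrite (Rabs_left y) | rewrite (Rabs_right y) | rewrite (Rabs_left y) | rewrite (Rabs_right y)]; auto; nra.
Qed.

Lemma hR_lt_iff (a b : Z) : hR (IZR a) < hR (IZR b) <-> (a < b)%Z.
Proof.
  split.
  - intro H. destruct (Z_lt_le_dec a b) as [h|h]; auto.
    exfalso. apply Z.le_lteq in h. destruct h as [h|h].
    + apply IZR_lt in h. apply hR_mono in h. lra.
    + subst. lra.
  - intro h. apply hR_mono, IZR_lt; auto.
Qed.

Definition pos (s a : Z) : R := 3 * IZR s + hR (IZR a).

Definition zov (s a b s' c d : Z) : Prop := s = s' /\ (a < d)%Z /\ (c < b)%Z.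

Lemma pos_ov s a b s' c d :
  pos s a < pos s' d /\ pos s' c < pos s b <-> zov s a b s' c d.
Proof.
  unfold pos, zov.
  generalize (hR_bounds (IZR a)) (hR_bounds (IZR b)) (hR_bounds (IZR c)) (hR_bounds (IZR d)).
  intros Ha Hb Hc Hd.
  split.
  - intros [H1 H2].
    destruct (Z.lt_trichotomy s s') as [h|[h|h]].
    + apply Zlt_le_succ in h. apply IZR_le in h. rewrite succ_IZR in h. lra.
    + subst. split; auto. split; apply hR_lt_iff; lra.
    + apply Zlt_le_succ in h. apply IZR_le in h. rewrite succ_IZR in h. lra.
  - intros [-> [h1 h2]]. apply hR_lt_iff in h1. apply hR_lt_iff in h2. lra.
Qed.

Lemma ovl_ex a b c d : a < b -> c < d ->
  ((exists x, (a < x /\ x < b) /\ (c < x /\ x < d)) <-> a < d /\ c < b).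
Proof.
  intros Hab Hcd; split.
  - intros [x [[h1 h2] [h3 h4]]]; lra.
  - intros [h1 h2].
    exists ((Rmax a c + Rmin b d) / 2).
    destruct (Rle_dec a c); destruct (Rle_dec b d);
    [rewrite Rmax_right ?Rmin_left | rewrite Rmax_right ?Rmin_right | rewrite Rmax_left ?Rmin_left | rewrite Rmax_left ?Rmin_right]; lra.
Qed.

Definition mkrect (sx ax bx sy ay ey : Z) : rect :=
  Rect (pos sx ax) (pos sx bx) (pos sy ay) (pos sy ey).

Lemma TRVG_of (V : Type) (adj : V -> V -> Prop) (sx ax bx sy ay ey : V -> Z) :
  (forall v, (ax v < bx v)%Z /\ (ay v < ey v)%Z) ->
  (forall u v, u <> v -> ~ (zov (sx u) (ax u) (bx u) (sx v) (ax v) (bx v) /\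
                           zov (sy u) (ay u) (ey u) (sy v) (ay v) (ey v))) ->
  (forall u v, u <> v -> (adj u v <-> zov (sx u) (ax u) (bx u) (sx v) (ax v) (bx v) \/
                                      zov (sy u) (ay u) (ey u) (sy v) (ay v) (ey v))) ->
  is_TRVG adj.
Proof.
  intros Hnd Hdis Hadj.
  assert (Hlt : forall s a b, (a < b)%Z -> pos s a < pos s b).
  { intros s a b h. unfold pos. apply hR_lt_iff in h. lra. }
  exists (fun v => mkrect (sx v) (ax v) (bx v) (sy v) (ay v) (ey v)).
  assert (ND : forall v, nondegenerate (mkrect (sx v) (ax v) (bx v) (sy v) (ay v) (ey v))).
  { intro v. destruct (Hnd v). split; simpl; apply Hlt; auto. }
  split; [exact ND|]. split.
  - intros u v huv [x [y [[[h1 h2] [h3 h4]] [[h5 h6] [h7 h8]]]]]. simpl in *.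
    apply (Hdis u v huv). split; apply pos_ov; lra.
  - intros u v huv. rewrite (Hadj u v huv).
    destruct (ND u) as [Xu Yu]. destruct (ND v) as [Xv Yv]. simpl in *.
    rewrite <- !pos_ov.
    unfold horiz_visible, vert_visible, in_interior; simpl.
    split.
    + intros [H|H].
      * right. destruct (proj2 (ovl_ex _ _ _ _ Xu Xv) H) as [c [h1 h2]].
        exists c. split; [exists ((pos (sy u) (ay u) + pos (sy u) (ey u))/2) | exists ((pos (sy v) (ay v) + pos (sy v) (ey v))/2)]; lra.
      * left. destruct (proj2 (ovl_ex _ _ _ _ Yu Yv) H) as [c [h1 h2]].
        exists c. split; [exists ((pos (sx u) (ax u) + pos (sx u) (bx u))/2) | exists ((pos (sx v) (ax v) + pos (sx v) (bx v))/2)]; lra.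
    + intros [[c [[x h1] [x' h2]]]|[c [[y h1] [y' h2]]]].
      * right. apply (ovl_ex _ _ _ _ Yu Yv). exists c. lra.
      * left. apply (ovl_ex _ _ _ _ Xu Xv). exists c. lra.
Qed.

Close Scope R_scope.

Lemma rect_part : is_TRVG rect_grid_adj.
Proof.
  apply (@TRVG_of _ _ (fun p => snd p) (fun p => (2 * fst p)%Z) (fun p => (2 * fst p + 3)%Z)
                 (fun p => fst p) (fun p => (2 * snd p)%Z) (fun p => (2 * snd p + 3)%Z)).
  - intros; cbn [fst snd]; lia.
  - intros [a b] [c d] h; unfold zov; cbn [fst snd]. intros [[h1 h2] [h3 h4]]. apply h. f_equal; lia.
  - intros [a b] [c d] h; unfold zov, rect_grid_adj; cbn [fst snd].
    assert (a <> c \/ b <> d)%Z by (destruct (Z.eq_dec a c); destruct (Z.eq_dec b d); subst; auto).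
    lia.
Qed.

Lemma tri_part : is_TRVG tri_grid_adj.
Proof.
  apply (@TRVG_of _ _ (fun p => (snd p / 2)%Z) (fun p => (2 * fst p + snd p mod 2)%Z)
                 (fun p => (2 * fst p + snd p mod 2 + 3)%Z)
                 (fun p => ((snd p - 1) / 2)%Z) (fun p => (2 * fst p + (snd p - 1) mod 2)%Z)
                 (fun p => (2 * fst p + (snd p - 1) mod 2 + 2)%Z)).
  - intros; cbn [fst snd]; lia.
  - intros [a b] [c d] h; unfold zov; cbn [fst snd]. intros [[h1 h2] [h3 h4]].
    assert (b = d) by (Z.to_euclidean_division_equations; lia). subst. apply h. f_equal; lia.
  - intros [a b] [c d] h; unfold zov, tri_grid_adj; cbn [fst snd].
    assert (a <> c \/ b <> d)%Z by (destruct (Z.eq_dec a c); destruct (Z.eq_dec b d); subst; auto).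
    rewrite !pair_equal_spec. Z.to_euclidean_division_equations; lia.
Qed.

Lemma TRVG_inj (V W : Type) (adj : V -> V -> Prop) (g : W -> V) :
  (forall a b, g a = g b -> a = b) -> is_TRVG adj -> is_TRVG (fun a b => adj (g a) (g b)).
Proof.
  intros gi [f [H1 [H2 H3]]]. exists (fun a => f (g a)). split; [auto|split].
  - intros u v h. apply H2. intro e. apply h, gi, e.
  - intros u v h. apply H3. intro e. apply h, gi, e.
Qed.

Lemma hex_part : is_TRVG hex_grid_adj.
Proof.
  apply (@TRVG_inj _ _ tri_grid_adj (fun u : hex_vertex => proj1_sig u)); [|exact tri_part].
  intros [a ha] [b hb]; simpl; intros ->. f_equal. apply proof_irrelevance.
Qed.

Lemma modS_small (i n : nat) : (i < n)%N -> (i.+1 %% n = if i.+1 == n then 0 else i.+1)%N.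
Proof.
  move=> h; case: eqP => [->|ne]; first by rewrite modnn.
  by rewrite modn_small // ltn_neqAle; apply/andP; split; [apply/eqP|].
Qed.

Lemma cycle_part : forall n : nat, (3 <= n)%N -> is_TRVG (@cycle_adj n).
Proof.
  move=> n hn.
  apply (@TRVG_of _ _ (fun _ => 0%Z) (fun i : 'I_n => (2 * Z.of_nat i)%Z) (fun i : 'I_n => (2 * Z.of_nat i + 3)%Z)
     (fun i : 'I_n => if (nat_of_ord i == 0)%N || (nat_of_ord i == n.-1) then 0%Z else Z.of_nat i) (fun _ => 0%Z) (fun _ => 1%Z)).
  - move=> v; lia.
  - move=> u v huv; rewrite /zov => -[[_ [h1 h2]] [h3 _]].
    apply huv, ord_inj. have hu := ltn_ord u. have hv := ltn_ord v.
    move: h1 h2 h3; case: (nat_of_ord u == 0)%N / eqP => [hu0|hu0]; case: (nat_of_ord v == 0)%N / eqP => [hv0|hv0];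
    case: (nat_of_ord u == n.-1) / eqP => [hu'|hu']; case: (nat_of_ord v == n.-1) / eqP => [hv'|hv'];
    move: hu hv hn hu0 hv0 hu' hv'; move: (nat_of_ord u) (nat_of_ord v) => a b; clear; cbn [orb]; lia.
  - move=> u v huv. have ne : nat_of_ord u <> nat_of_ord v by move=> e; apply huv, ord_inj.
    have hu := ltn_ord u. have hv := ltn_ord v.
    rewrite /cycle_adj /zov; change (\val u) with (nat_of_ord u); change (\val v) with (nat_of_ord v); rewrite !modS_small //.
    case: (nat_of_ord u == 0)%N / eqP => [hu0|hu0]; case: (nat_of_ord v == 0)%N / eqP => [hv0|hv0];
    case: (nat_of_ord u == n.-1) / eqP => [hu'|hu']; case: (nat_of_ord v == n.-1) / eqP => [hv'|hv'];
    case: ((nat_of_ord u).+1 == n) / eqP => [hu''|hu'']; case: ((nat_of_ord v).+1 == n) / eqP => [hv''|hv''];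
    move: hu hv ne hn hu0 hv0 hu' hv' hu'' hv''; move: (nat_of_ord u) (nat_of_ord v) => a b; clear; cbn [orb]; lia.
Qed.

Lemma threshold_part : forall (V : finType) (e : rel V), is_threshold e -> is_TRVG (fun u v => e u v).
Proof.
  move=> V e [_ [_ [o [b [oi he]]]]].
  apply (@TRVG_of _ _ (fun _ => 0%Z) (fun v => if b (o v) then (-1)%Z else (4 * Z.of_nat (o v))%Z)
     (fun v => if b (o v) then (4 * Z.of_nat (o v))%Z else (4 * Z.of_nat (o v) + 1)%Z)
     (fun v => Z.of_nat (o v)) (fun _ => 0%Z) (fun _ => 1%Z)).
  - move=> v; case: (b (o v)); lia.
  - move=> u v huv; rewrite /zov => -[_ [h _]]. apply huv, oi. lia.
  - move=> u v huv. have ne : o u <> o v by move=> E; apply huv, oi.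
    rewrite he; last by apply/eqP.
    rewrite /zov.
    have [lt|gt] : (o u < o v \/ o v < o u)%N by lia.
    + rewrite (maxn_idPr (ltnW lt)).
      case: (b (o u)); case: (b (o v)); split; try (move=> *; lia); move=> [[_ [h1 h2]]|[h1 _]]; lia.
    + rewrite (maxn_idPl (ltnW gt)).
      case: (b (o u)); case: (b (o v)); split; try (move=> *; lia); move=> [[_ [h1 h2]]|[h1 _]]; lia.
Qed.

Set Implicit Arguments.
Unset Strict Implicit.
Unset Printing Implicit Defensive.
Fixpoint ball (V : finType) (e : rel V) (r : V) (k : nat) : {set V} :=
  if k is k'.+1 then ball e r k' :|: [set y | [exists x in ball e r k', e x y]] else [set r].

Lemma ball_step (V : finType) (e : rel V) r k x y : x \in ball e r k -> e x y -> y \in ball e r k.+1.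
Proof. move=> hx hxy /=; rewrite in_setU in_set; apply/orP; right; apply/existsP; exists x; rewrite hx hxy. done. Qed.

Lemma ball_path (V : finType) (e : rel V) r p : forall x k, x \in ball e r k -> path e x p ->
  last x p \in ball e r (k + size p).
Proof.
  elim: p => [|y p IH] x k hx /=; first by rewrite addn0.
  move=> /andP [hxy hp]. rewrite addnS -addSn. apply: IH => //. exact: ball_step hx hxy.
Qed.

Lemma no_detour (V : finType) (e : rel V) (u v w : V) : symmetric e -> irreflexive e -> ~ has_cycle e ->
  e u v -> e u w -> v != w -> ~~ connect [rel a b | e a b && (a != u) && (b != u)] v w.
Proof.
  move=> sym irr nc huv huw vw. apply/negP => /connectP [p pth wE].
  case: (shortenP pth) wE => p' pth' uq' _ wE.
  have pe : path e v p' by apply: sub_path pth' => a b /= /andP [/andP [] ]. 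
  have nu : forall q x, path [rel a b | e a b && (a != u) && (b != u)] x q -> u \notin q.
  { elim=> [|y q IH] x //= /andP [/andP [/andP [_ _] yu] hq].
    rewrite in_cons negb_or eq_sym yu /=. exact: IH hq. }
  have vu : v != u by apply/eqP => E; move: huv; rewrite E irr.
  apply: nc. exists (u :: v :: p'). split; last split.
  - case: p' {pth' uq' pe nu} wE => [|y q] /= wE; last by [].
    by move: vw; rewrite wE eqxx.
  - rewrite /= in_cons negb_or eq_sym vu (nu _ _ pth') /=. exact: uq'.
  - rewrite /= rcons_path huv pe /= -wE. by rewrite sym.
Qed.

Definition par (V : finType) (e : rel V) (d : V -> nat) (u : V) : V :=
  odflt u [pick w | e u w && (d w < d u)].

Lemma tree_struct (V : finType) (e : rel V) (r : V) (d : V -> nat) :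
  symmetric e -> irreflexive e -> ~ has_cycle e ->
  (forall v, v \in ball e r (d v)) -> (forall v k, v \in ball e r k -> (d v <= k)%N) ->
  (forall u, (0 < d u)%N -> e u (par e d u) /\ (d (par e d u)).+1 = d u) /\
  (forall v, d v = 0%N -> v = r) /\
  (forall u v, u != v -> e u v <-> ((d u = (d v).+1 /\ par e d u = v) \/ (d v = (d u).+1 /\ par e d v = u))).
Proof.
  move=> sym irr nc D1 D2.
  have P1 : forall v, d v = 0%N -> v = r.
  { move=> v h; have := D1 v; rewrite h /= in_set1 => /eqP //. }
  have P3 : forall u v, e u v -> (d v <= (d u).+1)%N.
  { move=> u v h; apply: D2; exact: ball_step (D1 u) h. }
  have P2 : forall k v, d v = k.+1 -> exists w, e w v /\ d w = k.
  { move=> k v h. have := D1 v; rewrite h /= in_setU => /orP [hv|].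
    - have := D2 _ _ hv; rewrite h ltnn //.
    - rewrite in_set => /existsP [x /andP [hx hxv]]. exists x; split => //.
      have := D2 _ _ hx; have := P3 _ _ hxv; rewrite h; lia. }
  have C : forall u v w, e u v -> e u w -> v != w -> (d v <= d u)%N -> (d w <= d u)%N -> False.
  { move=> u v w huv huw vw dv dw.
    set e' := [rel a b | e a b && (a != u) && (b != u)].
    have sym' : symmetric e' by move=> a b /=; rewrite sym andbAC.
    have desc : forall k x, d x = k -> x != u -> (k <= d u)%N -> connect e' x r.
    { elim=> [|k IH] x hx xu hk; first by rewrite (P1 _ hx) connect0.
      have [y [hyx hy]] := P2 _ _ hx.
      have yu : y != u by apply/eqP => E; move: hk; rewrite -hy E; lia.
      apply: connect_trans (IH y hy yu _); last by lia.
      apply: connect1 => /=. by rewrite sym hyx xu yu. }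
    have vu : v != u by apply/eqP => E; move: huv; rewrite E irr.
    have wu : w != u by apply/eqP => E; move: huw; rewrite E irr.
    have cv := desc _ v erefl vu dv. have cw := desc _ w erefl wu dw.
    rewrite (sym_connect_sym sym') in cw.
    have := no_detour sym irr nc huv huw vw. by rewrite (connect_trans cv cw). }
  have PS : forall u, (0 < d u)%N -> e u (par e d u) /\ (d (par e d u)).+1 = d u.
  { move=> u hu. rewrite /par. case: pickP => [w /andP [huw hw]|none] /=.
    - split => //. have := P3 _ _ huw. have := P3 _ _ huw. rewrite sym in huw.
      have := P3 _ _ huw. lia.
    - exfalso. case E: (d u) hu => [|k] // _. have [w [hwu hw]] := P2 _ _ E.
      have := none w. by rewrite sym hwu hw E ltnSn. }
  split => //. split => //.
  move=> u v uv. split.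
  - move=> huv. have h1 := P3 _ _ huv. have h2 := P3 v u ltac:(by rewrite sym).
    have [E|[E|E]] : d u = d v \/ d u = (d v).+1 \/ d v = (d u).+1 by lia.
    + exfalso. case Eu: (d u) => [|k].
      * move: uv; rewrite (P1 u Eu) (P1 v) ?eqxx //; lia.
      * have [hp dp] := PS u ltac:(by rewrite Eu).
        apply: (C u (par e d u) v hp huv) => //; try lia.
        apply/eqP => pv; move: dp; rewrite pv; lia.
    + left; split => //. have [hp dp] := PS u ltac:(by rewrite E).
      case: (eqVneq (par e d u) v) => // pv; exfalso.
      apply: (C u (par e d u) v hp huv pv); lia.
    + right; split => //. have [hp dp] := PS v ltac:(by rewrite E).
      rewrite sym in huv.
      case: (eqVneq (par e d v) u) => // pv; exfalso.
      apply: (C v (par e d v) u hp huv pv); lia.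
  - move=> [[E <-]|[E <-]].
    + by have [] := PS u ltac:(by rewrite E).
    + rewrite sym. by have [] := PS v ltac:(by rewrite E).
Qed.

Lemma tree_part : forall (V : finType) (e : rel V), symmetric e -> irreflexive e -> is_tree e ->
     is_TRVG (fun u v => e u v).
Proof.
  move=> V e sym irr [hV [conn nc]].
  case/card_gt0P: hV => r _.
  have hex : forall v, exists k, v \in ball e r k.
  { move=> v. have /connectP [p pth ->] := conn r v. exists (0 + size p)%N.
    apply: ball_path pth. by rewrite /= in_set1. }
  pose d v := ex_minn (hex v).
  have D1 : forall v, v \in ball e r (d v) by move=> v; rewrite /d; case: ex_minnP.
  have D2 : forall v k, v \in ball e r k -> (d v <= k)%N.
  { move=> v k h; rewrite /d; case: ex_minnP => m _; apply; exact h. }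
  have [PS [P1 ADJ]] := tree_struct sym irr nc D1 D2.
  pose p := par e d.
  pose n (v : V) := Z.of_nat (enum_rank v).
  pose N := Z.of_nat #|V|.
  have nb : forall v, (0 <= n v < N)%Z.
  { move=> v; rewrite /n /N. have := (ltn_ord (enum_rank v) : (enum_rank v < #|V|)%N). lia. }
  have nE : forall x y, x = y <-> n x = n y.
  { move=> x y; split => [->//|h]. apply: enum_rank_inj. apply: ord_inj. rewrite /n in h. lia. }
  apply (@TRVG_of _ _
    (fun v => if odd (d v) then n (p v) else n v)
    (fun v => if odd (d v) then (2 * n v + 1)%Z else 0%Z)
    (fun v => if odd (d v) then (2 * n v + 2)%Z else (2 * N + 3)%Z)
    (fun v => if odd (d v) then n v else if d v == 0%N then (-1)%Z else n (p v))
    (fun v => if odd (d v) then 0%Z else (2 * n v + 1)%Z)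
    (fun v => if odd (d v) then (2 * N + 3)%Z else (2 * n v + 2)%Z)).
  - move=> v. have := nb v. case: (odd (d v)); lia.
  - move=> u v uv.
    have F1 := nb u. have F2 := nb v. have F0 : n u <> n v by move=> h; apply uv; apply/nE.
    have F3 : (0 < d u)%N -> n (p u) = n v -> (d v).+1 = d u.
    { move=> h1 /nE h2. have [_ <-] := PS u h1. by rewrite /p in h2; rewrite h2. }
    have F4 : (0 < d v)%N -> n (p v) = n u -> (d u).+1 = d v.
    { move=> h1 /nE h2. have [_ <-] := PS v h1. by rewrite /p in h2; rewrite h2. }
    have F5 : d u = 0%N -> d v = 0%N -> False.
    { move=> h1 h2. apply uv. by rewrite (P1 _ h1) (P1 _ h2). }
    rewrite /zov.
    move: (modn2 (d u)) (modn2 (d v)).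
    case: (odd (d u)); case: (odd (d v)) => Ou Ov;
    case: (eqVneq (d u) 0%N) => Zu; case: (eqVneq (d v) 0%N) => Zv;
    move: F0 F1 F2 F3 F4 F5 Ou Ov Zu Zv; cbv beta iota delta [nat_of_bool];
    move: (n u) (n v) (n (p u)) (n (p v)) (d u) (d v) => a b c f g h; clear; lia.
  - move=> u v uv. rewrite ADJ; last by apply/eqP.
    rewrite !(nE (p _)).
    have F1 := nb u. have F2 := nb v. have F0 : n u <> n v by move=> h; apply uv; apply/nE.
    have F3 : (0 < d u)%N -> n (p u) = n v -> (d v).+1 = d u.
    { move=> h1 /nE h2. have [_ <-] := PS u h1. by rewrite /p in h2; rewrite h2. }
    have F4 : (0 < d v)%N -> n (p v) = n u -> (d u).+1 = d v.
    { move=> h1 /nE h2. have [_ <-] := PS v h1. by rewrite /p in h2; rewrite h2. }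
    have F5 : d u = 0%N -> d v = 0%N -> False.
    { move=> h1 h2. apply uv. by rewrite (P1 _ h1) (P1 _ h2). }
    rewrite /zov.
    move: (modn2 (d u)) (modn2 (d v)).
    case: (odd (d u)); case: (odd (d v)) => Ou Ov;
    case: (eqVneq (d u) 0%N) => Zu; case: (eqVneq (d v) 0%N) => Zv;
    move: F0 F1 F2 F3 F4 F5 Ou Ov Zu Zv; cbv beta iota delta [nat_of_bool];
    move: (n u) (n v) (n (p u)) (n (p v)) (d u) (d v) => a b c f g h; clear; lia.
Qed.

Theorem theorem1 :
  (* (i) threshold graphs *)
  (forall (V : finType) (e : rel V), is_threshold e -> is_TRVG (fun u v => e u v)) /\
  (* (ii) trees *)
  (forall (V : finType) (e : rel V), symmetric e -> irreflexive e -> is_tree e ->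
     is_TRVG (fun u v => e u v)) /\
  (* (iii) cycles C_n, n >= 3 *)
  (forall n : nat, (3 <= n)%N -> is_TRVG (@cycle_adj n)) /\
  (* (iv) infinite rectangular grid *)
  is_TRVG rect_grid_adj /\
  (* (v) infinite triangular grid *)
  is_TRVG tri_grid_adj /\
  (* (vi) infinite hexagonal grid *)
  is_TRVG hex_grid_adj.
Proof.
  split; [exact threshold_part|].
  split; [exact tree_part|].
  split; [exact cycle_part|].
  split; [exact rect_part|].
  split; [exact tri_part|].
  exact hex_part.
Qed.
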